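(* Let $\mathcal{X}=\{1,\dots,n\}$, let $\pi$ be a strictly positive probability distribution on $\mathcal{X}$, let $P$ be a $\pi$-reversible transition matrix, let $G$ be the Gibbs kernel induced by some partition of $\mathcal{X}$, and let $A_\alpha=\alpha P+(1-\alpha)G$. Then for every integer $l\geq2$ and every $\alpha\in(0,1)$, $$\|A_\alpha^l-\Pi\|_{F,\pi}^2\leq(1-\alpha\gamma^*(P))^{2(l-1)}\|A_\alpha-\Pi\|_{F,\pi}^2.$$
   Context: $\pi$-reversible means $\pi(x)P(x,y)=\pi(y)P(y,x)$. Gibbs kernel of a partition $\bigsqcup_i\mathcal{O}_i$: $G(x,y)=\pi(y)/\pi(\mathcal{O}(x))$ if $y\in\mathcal{O}(x)$ and $0$ otherwise. $\Pi$ is the matrix with every row equal to $\pi$; $\|M\|_{F,\pi}^2=\operatorname{Tr}(M^*M)$ with $M^*(x,y)=\pi(y)M(y,x)/\pi(x)$. For $\pi$-reversible $P$ with eigenvalues $\lambda_1\ge\dots\ge\lambda_n$, $\gamma^*(P)=1-\max\{|\lambda_2(P)|,|\lambda_n(P)|\}$. *)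

(* Defs.v *)
From HB Require Import structures.
From mathcomp Require Import all_boot all_order all_algebra.
Set Implicit Arguments. Unset Strict Implicit. Unset Printing Implicit Defensive.
Import Order.TTheory GRing.Theory Num.Theory.
Local Open Scope ring_scope.

Section Defs.
Variables (R : rcfType) (n : nat).

Definition pos_prob (pi : 'I_n -> R) : Prop :=
  (forall x, 0 < pi x) /\ \sum_x pi x = 1.

Definition stochastic (P : 'M[R]_n) : Prop :=
  (forall x y, 0 <= P x y) /\ (forall x, \sum_y P x y = 1).

Definition reversible (pi : 'I_n -> R) (P : 'M[R]_n) : Prop :=
  forall x y, pi x * P x y = pi y * P y x.

Definition gibbs_kernel (pi : 'I_n -> R) (part : {set {set 'I_n}}) : 'M[R]_n :=
  \matrix_(x, y) (if y \in pblock part x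
                  then pi y / \sum_(z in pblock part x) pi z else 0).

Definition Pimx (pi : 'I_n -> R) : 'M[R]_n := \matrix_(x, y) pi y.

Definition pi_adj (pi : 'I_n -> R) (M : 'M[R]_n) : 'M[R]_n :=
  \matrix_(x, y) (pi y * M y x / pi x).

Definition frob_pi2 (pi : 'I_n -> R) (M : 'M[R]_n) : R :=
  \tr (pi_adj pi M *m M).

Definition sorted_eigenvalues (P : 'M[R]_n) (s : seq R) : Prop :=
  sorted (fun a b => b <= a) s /\
  char_poly P = \prod_(l <- s) ('X - l%:P).

(* gamma^*(P) = 1 - max(|lambda_2|, |lambda_n|) computed from the sorted
   eigenvalue list s (lambda_2 = s`_1, lambda_n = s`_(n-1)). *)
Definition abs_spectral_gap (s : seq R) : R :=
  1 - Num.max `|s`_1| `|s`_(n.-1)|.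

End Defs.

(* Main.v *)
Require Import Defs.
Set Warnings "-notation-overridden,-ambiguous-paths".
From HB Require Import structures.
From mathcomp Require Import all_boot all_order all_algebra.
From mathcomp Require Import complex.
From mathcomp Require Import zify.
From mathcomp Require Import ring lra.
Import Order.TTheory GRing.Theory Num.Theory.
Local Open Scope ring_scope.

Module Helpers.
Set Implicit Arguments. Unset Strict Implicit. Unset Printing Implicit Defensive.
Module Spec.
Local Open Scope sesquilinear_scope.
Section CoreC.
Variable C : numClosedFieldType.

Definition nmC n (x : 'rV[C]_n) : C := (x *m x^t*) 0 0.

Lemma nmCE n (x : 'rV[C]_n) : nmC x = \sum_i `|x 0 i| ^+ 2.
Proof. by rewrite /nmC mxE; apply: eq_bigr => i _; rewrite !mxE normCK. Qed.

Lemma nmC_unitary n (x : 'rV[C]_n) (U : 'M[C]_n) : U \is unitarymx -> nmC (x *m U) = nmC x.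
Proof.
move=> Uu; rewrite /nmC trmx_mul map_mxM mulmxA -(mulmxA x) (unitarymxP Uu).
by rewrite (mulmx1 x).
Qed.

Lemma core_C n (S U : 'M[C]_n) (d : 'rV[C]_n) (rho : C) (q w : 'rV[C]_n) :
  U \is unitarymx -> S = U^t* *m diag_mx d *m U ->
  0 <= rho ->
  (forall k, `|d 0 k| <= 1) ->
  (forall k j, k != j -> rho < `|d 0 k| -> `|d 0 j| <= rho) ->
  q *m S = q -> q != 0 -> (w *m q^t*) 0 0 = 0 ->
  nmC (w *m S) <= rho ^+ 2 * nmC w.
Proof.
move=> Uu SE rho0 d1 dcnt qS q0 wq.
have UtU : U^t* *m U = 1%:M by apply: mulmx1C; apply/unitarymxP.
set zq := q *m U^t*; set zw := w *m U^t*.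
have qE : q = zq *m U by rewrite /zq -mulmxA UtU mulmx1.
have wE : w = zw *m U by rewrite /zw -mulmxA UtU mulmx1.
have hS x : x *m S = (x *m U^t*) *m diag_mx d *m U by rewrite SE !mulmxA.
have zqd : zq *m diag_mx d = zq.
  have := congr1 (fun X => X *m U^t*) qS; rewrite /= hS -/zq.
  by rewrite mulmxtVK // => ->.
have zqk (k : 'I_n) : zq 0 k * d 0 k = zq 0 k.
  have := congr1 (fun X : 'rV[C]_n => X 0 k) zqd; by rewrite /= mul_mx_diag mxE => ->.
have ortho : \sum_k zw 0 k * (zq 0 k)^* = 0.
  move: wq; rewrite wE qE trmx_mul map_mxM mulmxA -(mulmxA zw) (unitarymxP _) // mulmx1.
  rewrite mxE => H; apply: (etrans _ H); apply: eq_bigr => k _; by rewrite !mxE.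
rewrite (hS _ w) -/zw (nmC_unitary (zw *m diag_mx d) Uu) wE (nmC_unitary zw Uu) !nmCE mulr_sumr.
apply: ler_sum => k _; rewrite mul_mx_diag mxE normrM exprMn.
have [j zqj] : exists j, zq 0 j != 0.
  apply/existsP; apply: contraNT q0; rewrite negb_exists => /forallP H.
  rewrite qE; suff -> : zq = 0 by rewrite mul0mx.
  apply/rowP => i'; have := H i'; rewrite negbK => /eqP ->; by rewrite mxE.
have realrho : rho \is Num.real by exact: ger0_real.
have [dk | dk] := boolP (`|d 0 k| <= rho).
  rewrite mulrC ler_wpM2r ?exprn_ge0 // !expr2 ler_pM //.
have {}dk : rho < `|d 0 k| by rewrite real_ltNge ?normr_real.
have onlyk j' : zq 0 j' != 0 -> j' = k.
  move=> zqj'; have dj1 : d 0 j' = 1.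
    by apply: (mulfI zqj'); rewrite zqk mulr1.
  apply/eqP; apply/negPn/negP => jk.
  have := dcnt k j'; rewrite eq_sym => /(_ jk dk); rewrite dj1 normr1 => h1.
  by have := lt_le_trans (le_lt_trans h1 dk) (d1 k); rewrite ltxx.
have zqk0 : zq 0 k != 0 by rewrite -(onlyk j zqj).
move: ortho; rewrite (bigD1 k) //= big1 => [|j' j'k]; last first.
  have -> : zq 0 j' = 0.
    by apply/eqP/negPn/negP => /onlyk /eqP; rewrite (negbTE j'k).
  by rewrite conjC0 mulr0.
rewrite addr0 => /eqP; rewrite mulf_eq0 conjC_eq0 (negbTE zqk0) orbF => /eqP ->.
by rewrite normr0 expr0n /= mulr0 mul0r.
Qed.
End CoreC.
Lemma char_poly_conj (F : fieldType) n (A U V : 'M[F]_n) : V *m U = 1%:M ->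
  char_poly (V *m A *m U) = char_poly A.
Proof.
move=> VU; rewrite /char_poly /char_poly_mx.
have -> : 'X%:M - map_mx polyC (V *m A *m U) =
  map_mx polyC V *m ('X%:M - map_mx polyC A) *m map_mx polyC U.
  rewrite !map_mxM mulmxBr mulmxBl; congr (_ - _).
  by rewrite scalar_mxC -mulmxA -map_mxM VU map_mx1 mulmx1.
rewrite !det_mulmx !det_map_mx mulrC mulrA -rmorphM -det_mulmx (mulmx1C VU).
by rewrite det1 rmorph1 mul1r.
Qed.
Lemma herm_spec (C : numClosedFieldType) n (S : 'M[C]_n) : S \is hermsymmx ->
  exists U d, [/\ U \is unitarymx, S = U^t* *m diag_mx d *m U &
     char_poly S = \prod_(k < n) ('X - (d 0 k)%:P)].
Proof.
move=> Sh; have /orthomx_spectralP SE := hermitian_normalmx Sh.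
set U := spectralmx S in SE; set d := spectral_diag S in SE.
have Uu : U \is unitarymx by exact: spectral_unitarymx.
exists U, d; rewrite -invmx_unitary //; split => //.
rewrite {1}SE char_poly_conj; last by rewrite mulVmx // unitarymx_unit.
rewrite char_poly_trig ?diag_mx_is_trig //.
by apply: eq_bigr => k _; rewrite mxE eqxx mulr1n.
Qed.

Lemma normC_real (R : rcfType) (x : R) : `|(x%:C)%C| = (`|x|%:C)%C.
Proof. by rewrite normc_def /= expr0n /= addr0 sqrtr_sqr. Qed.

Lemma conjC_real (R : rcfType) (x : R) : ((x%:C)%C)^* = (x%:C)%C :> R[i].
Proof. by rewrite conj_Creal // complex_real. Qed.

Lemma max_abs (R : realDomainType) (a b y : R) : b <= y -> y <= a ->
  `|y| <= Num.max `|a| `|b|.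
Proof.
move=> hb ha; rewrite le_max; case: (lerP 0 y) => hy.
  by rewrite ger0_norm // (le_trans ha (ler_norm a)).
rewrite ltr0_norm //; apply/orP; right; apply: (@le_trans _ _ (- b)).
  by rewrite lerN2.
by rewrite -normrN ler_norm.
Qed.

Lemma count_two (T : finType) (p : pred T) (k j : T) : k != j -> p k -> p j ->
  (2 <= count p (enum T))%N.
Proof.
move=> kj pk pj; rewrite -size_filter.
have -> : 2%N = size [:: k; j] by [].
apply: uniq_leq_size; first by rewrite /= inE kj.
by move=> x; rewrite !inE mem_filter mem_enum andbT => /orP[] /eqP ->.
Qed.

Lemma spec_R (R : rcfType) n (S : 'M[R]_n) (s : seq R) (q w : 'rV[R]_n) :
  S^T = S -> sorted (fun a b => b <= a) s ->
  char_poly S = \prod_(x <- s) ('X - x%:P) ->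
  (forall x, x \in s -> `|x| <= 1) ->
  q *m S = q -> q != 0 -> (w *m q^T) 0 0 = 0 ->
  \sum_i ((w *m S) 0 i) ^+ 2 <=
    (Num.max `|s`_1| `|s`_(n.-1)|) ^+ 2 * \sum_i (w 0 i) ^+ 2.
Proof.
move=> Ssym ssort Schar s1 qS q0 wq.
set rho := Num.max _ _.
have rho0 : 0 <= rho by rewrite le_max normr_ge0.
have sz : size s = n.
  by have := congr1 (fun p : {poly R} => size p) Schar; rewrite size_char_poly size_prod_XsubC => -[].
have srho y : y \in behead s -> `|y| <= rho.
  move=> ys; have [m] := elimT (nthP (0:R)) ys; rewrite size_behead sz => mlt <-.
  rewrite nth_behead; have leT_tr : transitive (fun a b : R => b <= a).
    by move=> a b c hab hbc; exact: le_trans hbc hab.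
  have leT_refl : reflexive (fun a b : R => b <= a) by move=> a; exact: lexx.
  have n2 : (1 < n)%N by case: n mlt {sz rho rho0 S Ssym Schar q w qS q0 wq} => [|[]].
  apply: max_abs.
    apply: (sorted_leq_nth leT_tr leT_refl 0 ssort); rewrite ?inE ?sz /=; lia.
  apply: (sorted_leq_nth leT_tr leT_refl 0 ssort); rewrite ?inE ?sz /=; lia.
have cnt : (count (fun t => (rho < `|t|)%R) s <= 1)%N.
  move: srho; clearbody rho; case: s {ssort Schar s1 sz} => [|x0 s'] //= srho.
  have -> : count (fun t => (rho < `|t|)%R) s' = 0%N.
    apply/eqP; rewrite -leqn0 leqNgt -has_count; apply/hasPn => y ys; rewrite -leNgt; exact: srho.
  by rewrite addn0 leq_b1.
pose SC := map_mx (real_complex R) S.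
have Sh : SC \is hermsymmx.
  apply/is_hermitianmxP; rewrite expr0 scale1r; apply/matrixP => i j.
  rewrite !mxE conjC_real; congr (_%:C)%C.
  by have := congr1 (fun M : 'M[R]_n => M i j) Ssym; rewrite /= mxE.
have [U [d [Uu SE cpE]]] := herm_spec Sh.
have cpC : char_poly SC = \prod_(x <- map (real_complex R) s) ('X - x%:P).
  by rewrite -map_char_poly Schar map_prod_XsubC big_map.
pose ds := [seq d 0 k | k <- enum 'I_n].
have pe : perm_eq ds (map (real_complex R) s).
  apply: prod_XsubC_eq; rewrite -cpC cpE big_map big_enum /=.
  by apply: eq_bigl => k; rewrite inE.
have dk k : exists2 t, t \in s & d 0 k = (t%:C)%C.
  have : d 0 k \in map (real_complex R) s by rewrite -(perm_mem pe) map_f // mem_enum.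
  by move=> /mapP [t ts ->]; exists t.
have nmR (v : 'rV[R]_n) :
    nmC (map_mx (real_complex R) v) = ((\sum_i (v 0 i) ^+ 2)%:C)%C.
  rewrite nmCE rmorph_sum; apply: eq_bigr => i _.
  by rewrite mxE normC_real -rmorphXn real_normK ?num_real.
have /permP pc := pe.
have h1 : 0 <= (rho%:C)%C :> R[i] by rewrite ler0c.
have h2 k : `|d 0 k| <= 1.
  have [t ts ->] := dk k.
  by rewrite normC_real -(rmorph1 (real_complex R)) lecR; exact: s1.
have h3 k j : k != j -> (rho%:C)%C < `|d 0 k| -> `|d 0 j| <= (rho%:C)%C.
  move=> kj rkC; have [tj tjs dj] := dk j.
  rewrite dj normC_real lecR leNgt; apply/negP => rj.
  move: cnt; rewrite leqNgt => /negP; apply.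
  have -> : count (fun t => (rho < `|t|)%R) s =
      count (fun x : R[i] => ((rho%:C)%C < `|x|)%R) ds.
    rewrite pc count_map; apply: eq_count => x /=; by rewrite normC_real ltcR.
  rewrite /ds count_map; apply: (@count_two _ _ k j kj) => //=.
  by rewrite dj normC_real ltcR.
have h4 : map_mx (real_complex R) q *m SC = map_mx (real_complex R) q.
  by rewrite -map_mxM qS.
have h5 : map_mx (real_complex R) q != 0 by rewrite map_mx_eq0.
have h6 : (map_mx (real_complex R) w *m (map_mx (real_complex R) q)^t*) 0 0 = 0.
  have -> : (map_mx (real_complex R) q)^t* = map_mx (real_complex R) q^T.
    by apply/matrixP => i j; rewrite !mxE conjC_real.
  by rewrite -map_mxM mxE wq rmorph0.
have key := core_C Uu SE h1 h2 h3 h4 h5 h6.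
by move: key; rewrite /SC -map_mxM !nmR -rmorphXn -rmorphM lecR.
Qed.

End Spec.
Import Spec.

Section Prob.
Variables (R : rcfType) (n : nat) (pi : 'I_n -> R).
Hypothesis pipos : forall x, 0 < pi x.
Hypothesis pisum : \sum_x pi x = 1.

Definition pn (f : 'cV[R]_n) := \sum_x pi x * (f x 0) ^+ 2.
Definition ip (f g : 'cV[R]_n) := \sum_x pi x * (f x 0 * g x 0).

Lemma pn_ge0 f : 0 <= pn f.
Proof. by apply: sumr_ge0 => x _; rewrite mulr_ge0 ?sqr_ge0 // ltW. Qed.

Lemma frobE (M : 'M[R]_n) : frob_pi2 pi M = \sum_x (pi x)^-1 * pn (col x M).
Proof.
rewrite /frob_pi2 /mxtrace; apply: eq_bigr => x _.
rewrite mxE /pn mulr_sumr; apply: eq_bigr => y _; rewrite !mxE.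
have := pipos x; rewrite lt0r => /andP [px _].
field.
exact: px.
Qed.

Lemma frob_mul (B X : 'M[R]_n) c : 0 <= c ->
  (forall f, pn (B *m f) <= c * pn f) -> frob_pi2 pi (B *m X) <= c * frob_pi2 pi X.
Proof.
move=> c0 hB; rewrite !frobE mulr_sumr; apply: ler_sum => x _.
rewrite colE -mulmxA -colE mulrCA ler_wpM2l // invr_ge0 ltW //.
Qed.

Lemma pn_split (u v : 'cV[R]_n) a b :
  pn (a *: u + b *: v) = a ^+ 2 * pn u + 2 * a * b * ip u v + b ^+ 2 * pn v.
Proof.
rewrite /pn /ip !mulr_sumr -!big_split /=; apply: eq_bigr => x _.
rewrite !mxE; ring.
Qed.

Lemma pn_eq0 (u : 'cV[R]_n) : pn u <= 0 -> u = 0.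
Proof.
move=> h; have h0 : pn u = 0 by apply/eqP; rewrite eq_le h pn_ge0.
apply/matrixP => x y; rewrite ord1 mxE.
move: h0 => /eqP; rewrite psumr_eq0 => [/allP/(_ x (mem_index_enum _))|y' _].
  by rewrite mulf_eq0 sqrf_eq0 gt_eqF //= => /eqP.
by rewrite mulr_ge0 ?sqr_ge0 // ltW.
Qed.

Lemma comb (u v f : 'cV[R]_n) a al :
  0 <= a -> 0 <= al <= 1 -> pn u <= a ^+ 2 * pn f -> pn v <= pn f ->
  pn (al *: u + (1 - al) *: v) <= (al * a + (1 - al)) ^+ 2 * pn f.
Proof.
move=> a0 /andP [al0 al1] hu hv; rewrite pn_split.
have hip : ip u v <= a * pn f.
  have [az | apos] := eqVneq a 0.
    move: hu; rewrite az expr0n /= mul0r => /pn_eq0 ->.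
    rewrite /ip big1 ?az ?mul0r // => x _; rewrite mxE mul0r mulr0 //.
  have ap : 0 < a by rewrite lt0r apos.
  have := pn_ge0 (1 *: u + (- a) *: v); rewrite pn_split => h.
  have h3 : a ^+ 2 * pn v <= a ^+ 2 * pn f by rewrite ler_wpM2l ?sqr_ge0.
  have h2 : a * ip u v <= a * (a * pn f).
    nra.
  by rewrite -(ler_pM2l ap).
have pv0 := pn_ge0 v; have pf0 := pn_ge0 f; have pu0 := pn_ge0 u.
have e1 : 0 <= al * (1 - al) by rewrite mulr_ge0 // subr_ge0.
have t1 : al ^+ 2 * pn u <= al ^+ 2 * (a ^+ 2 * pn f) by rewrite ler_wpM2l ?sqr_ge0.
have t2 : al * (1 - al) * ip u v <= al * (1 - al) * (a * pn f) by rewrite ler_wpM2l.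
have t3 : (1 - al) ^+ 2 * pn v <= (1 - al) ^+ 2 * pn f by rewrite ler_wpM2l ?sqr_ge0.
nra.
Qed.

Definition rowsum1 (K : 'M[R]_n) := forall x, \sum_y K x y = 1.
Definition stat (K : 'M[R]_n) := forall y, \sum_x pi x * K x y = pi y.
Definition nonneg (K : 'M[R]_n) := forall x y, 0 <= K x y.
Definition mean (f : 'cV[R]_n) := \sum_y pi y * f y 0.

Lemma mul_Pi_r K : rowsum1 K -> K *m Pimx pi = Pimx pi.
Proof.
move=> hK; apply/matrixP => x y; rewrite !mxE.
under eq_bigr do rewrite mxE.
by rewrite -mulr_suml hK mul1r.
Qed.

Lemma mul_Pi_l K : stat K -> Pimx pi *m K = Pimx pi.
Proof.
move=> hK; apply/matrixP => x y; rewrite !mxE -hK.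
by apply: eq_bigr => z _; rewrite mxE.
Qed.

Lemma rowsum_Pi : rowsum1 (Pimx pi).
Proof. by move=> x; rewrite -pisum; apply: eq_bigr => y _; rewrite mxE. Qed.

Lemma PiE f x : (Pimx pi *m f) x 0 = mean f.
Proof. by rewrite mxE; apply: eq_bigr => y _; rewrite mxE. Qed.

Lemma mean_K K f : stat K -> mean (K *m f) = mean f.
Proof.
move=> hK; rewrite /mean.
under eq_bigr do rewrite mxE mulr_sumr.
rewrite exchange_big /=; apply: eq_bigr => y _.
by rewrite -hK mulr_suml; apply: eq_bigr => x _; rewrite mulrA.
Qed.

Lemma pn_subPi K f : stat K ->
  pn ((K - Pimx pi) *m f) = pn (K *m f) - (mean f) ^+ 2.
Proof.
move=> hK.
have e : forall x, ((K - Pimx pi) *m f) x 0 = (K *m f) x 0 - mean f.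
  by move=> x; rewrite mulmxBl -(PiE f x) [LHS]mxE [X in _ + X]mxE.
rewrite /pn; under eq_bigr do rewrite e.
have key : forall m : R, \sum_x pi x * ((K *m f) x 0 - m) ^+ 2 =
   \sum_x pi x * (K *m f) x 0 ^+ 2 - 2 * m * \sum_x pi x * (K *m f) x 0
   + m ^+ 2 * \sum_x pi x.
  move=> m; rewrite !mulr_sumr -sumrB -big_split /=; apply: eq_bigr => x _; ring.
rewrite key.
have := mean_K f hK; rewrite /mean => ->; rewrite pisum; ring.
Qed.

Lemma jensen K f : nonneg K -> rowsum1 K -> stat K -> pn (K *m f) <= pn f.
Proof.
move=> h0 h1 hs.
have pt x : ((K *m f) x 0) ^+ 2 <= \sum_y K x y * (f y 0) ^+ 2.
  set M := (K *m f) x 0.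
  have hM : M = \sum_y K x y * f y 0 by rewrite /M mxE.
  have : 0 <= \sum_y K x y * (f y 0 - M) ^+ 2.
    by apply: sumr_ge0 => y _; rewrite mulr_ge0 ?sqr_ge0.
  have -> : \sum_y K x y * (f y 0 - M) ^+ 2 =
     \sum_y K x y * (f y 0) ^+ 2 - 2 * M * (\sum_y K x y * f y 0)
     + M ^+ 2 * \sum_y K x y.
    rewrite !mulr_sumr -sumrB -big_split /=; apply: eq_bigr => y _; ring.
  rewrite -hM h1 => h; lra.
apply: le_trans (_ : \sum_x pi x * \sum_y K x y * (f y 0) ^+ 2 <= _).
  by apply: ler_sum => x _; rewrite ler_wpM2l // ltW.
rewrite /pn; under eq_bigr do rewrite mulr_sumr.
rewrite exchange_big /=; rewrite le_eqVlt; apply/orP; left; apply/eqP; apply: eq_bigr => y _.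
by rewrite -hs mulr_suml; apply: eq_bigr => x _; rewrite mulrA.
Qed.

Lemma K_contract K f : nonneg K -> rowsum1 K -> stat K ->
  pn ((K - Pimx pi) *m f) <= pn f.
Proof.
move=> h0 h1 hs; rewrite pn_subPi //.
apply: le_trans (jensen f h0 h1 hs); rewrite lerBlDr lerDl sqr_ge0 //.
Qed.
End Prob.


Section Gibbs.
Variables (R : rcfType) (n : nat) (pi : 'I_n -> R) (part : {set {set 'I_n}}).
Hypothesis pipos : forall x, 0 < pi x.
Hypothesis hpart : partition part [set: 'I_n].

Let triv : trivIset part. Proof. by case/and3P: hpart. Qed.
Let cov : cover part = [set: 'I_n]. Proof. by case/and3P: hpart => /eqP. Qed.
Let mem_self x : x \in pblock part x. Proof. by rewrite mem_pblock cov inE. Qed.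
Let symB x y : (y \in pblock part x) = (x \in pblock part y).
Proof. by rewrite -!eq_pblock ?cov ?inE // eq_sym. Qed.
Let piB x := \sum_(z in pblock part x) pi z.
Let piB_gt0 x : 0 < piB x.
Proof.
rewrite /piB (bigD1 x) //= ltr_pwDl // ?pipos //.
by apply: sumr_ge0 => z _; exact: ltW.
Qed.

Lemma gibbs_nonneg : nonneg (gibbs_kernel pi part).
Proof.
move=> x y; rewrite mxE; case: ifP => // _.
by rewrite divr_ge0 // ltW // -/(piB x).
Qed.

Lemma gibbs_rowsum : rowsum1 (gibbs_kernel pi part).
Proof.
move=> x; under eq_bigr do rewrite mxE.
rewrite -big_mkcond /= -mulr_suml -/(piB x) divff //.
by rewrite gt_eqF.
Qed.

Lemma gibbs_stat : stat pi (gibbs_kernel pi part).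
Proof.
move=> y.
rewrite (eq_bigr (fun x => if x \in pblock part y then pi x * (pi y / piB y) else 0)).
  rewrite -big_mkcond /= -mulr_suml mulrCA -/(piB y) divff ?mulr1 //.
  by rewrite gt_eqF.
move=> x _; rewrite mxE symB; case: ifP => h; last by rewrite mulr0.
by rewrite /piB (same_pblock triv h).
Qed.
End Gibbs.


Section PBound.
Variables (R : rcfType) (n : nat) (pi : 'I_n -> R) (P : 'M[R]_n) (s : seq R).
Hypothesis pipos : forall x, 0 < pi x.
Hypothesis pisum : \sum_x pi x = 1.
Hypothesis Pnn : forall x y, 0 <= P x y.
Hypothesis Prow : forall x, \sum_y P x y = 1.
Hypothesis Prev : reversible pi P.

Lemma eig_bound x : root (char_poly P) x -> `|x| <= 1.
Proof.
rewrite -eigenvalue_root_char => /eigenvalueP [v vP v0].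
set V := \sum_y `|v 0 y|.
have V0 : 0 < V.
  rewrite lt_def sumr_ge0 ?andbT => [|y _]; last exact: normr_ge0.
  apply: contra v0 => /eqP /psumr_eq0P H; apply/eqP/rowP => y; rewrite mxE.
  by apply/eqP; rewrite -normr_eq0 H.
have : `|x| * V <= V.
  rewrite /V mulr_sumr.
  apply: le_trans (_ : \sum_y \sum_z `|v 0 z| * P z y <= _).
    apply: ler_sum => y _.
    rewrite -normrM; have := congr1 (fun M : 'rV[R]_n => M 0 y) vP; rewrite /= !mxE => <-.
    apply: le_trans (ler_norm_sum _ _ _) _; apply: ler_sum => z _.
    by rewrite normrM (ger0_norm (Pnn z y)).
  rewrite exchange_big /=; apply: ler_sum => z _.
  by rewrite -mulr_sumr Prow mulr1.
by rewrite -[X in _ <= X -> _]mul1r ler_pM2r.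
Qed.

Let a x := Num.sqrt (pi x).
Let a_gt0 x : 0 < a x. Proof. by rewrite sqrtr_gt0. Qed.
Let a_neq0 x : a x != 0. Proof. by rewrite gt_eqF. Qed.
Let a2 x : a x ^+ 2 = pi x. Proof. by rewrite sqr_sqrtr // ltW. Qed.
Let Pswap x y : P y x = pi x * P x y / pi y.
Proof. by rewrite Prev mulrC mulKf // gt_eqF. Qed.

Lemma P_meanzero (g : 'cV[R]_n) : mean pi g = 0 ->
  sorted (fun a b => b <= a) s -> char_poly P = \prod_(x <- s) ('X - x%:P) ->
  pn pi (P *m g) <= (Num.max `|s`_1| `|s`_(n.-1)|) ^+ 2 * pn pi g.
Proof.
move=> g0 ssort Pchar.
pose S := \matrix_(x, y) (a x * P x y / a y).
pose q := \row_x a x.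
pose w := \row_x (a x * g x 0).
have Ssym : S^T = S.
  apply/matrixP => x y; rewrite !mxE Pswap -!a2.
  by field; rewrite !a_neq0.
have Schar : char_poly S = \prod_(x <- s) ('X - x%:P).
  rewrite -Pchar -(char_poly_conj P (U := diag_mx (\row_x (a x)^-1)) (V := diag_mx (\row_x a x))).
    congr char_poly; apply/matrixP => x y.
    by rewrite mul_mx_diag mul_diag_mx !mxE.
  apply/matrixP => x y; rewrite mul_diag_mx !mxE.
  case: eqP => [->|]; rewrite ?mulr1n ?mulr0n ?mulr0 ?divff //.
have s1 x : x \in s -> `|x| <= 1.
  by move=> xs; apply: eig_bound; rewrite Pchar root_prod_XsubC.
have qS : q *m S = q.
  apply/rowP => y; rewrite !mxE.
  under eq_bigr do rewrite !mxE.
  rewrite (eq_bigr (fun x => a y * P y x)) => [|x _]; last first.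
    rewrite Pswap -!a2; field; by rewrite !a_neq0.
  by rewrite -mulr_sumr Prow mulr1.
have q0 : q != 0.
  apply/negP => /eqP q0; have := pisum.
  rewrite (eq_bigr (fun x => (q 0 x) ^+ 2)) => [|x _]; last by rewrite mxE a2.
  rewrite q0 big1 => [|x _]; last by rewrite mxE expr0n.
  by move/esym/eqP; rewrite oner_eq0.
have wq : (w *m q^T) 0 0 = 0.
  rewrite mxE; apply: (etrans _ g0); apply: eq_bigr => x _; rewrite !mxE -a2; ring.
have := spec_R Ssym ssort Schar s1 qS q0 wq.
have -> : \sum_i ((w *m S) 0 i) ^+ 2 = pn pi (P *m g).
  apply: eq_bigr => y _; rewrite !mxE.
  rewrite (eq_bigr (fun x => a y * (P y x * g x 0))) => [|x _]; last first.
    rewrite !mxE Pswap -!a2; field; by rewrite !a_neq0.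
  by rewrite -mulr_sumr exprMn a2.
have -> // : \sum_i (w 0 i) ^+ 2 = pn pi g.
by apply: eq_bigr => x _; rewrite mxE exprMn a2.
Qed.
End PBound.

End Helpers.
Import Helpers.
Unset Implicit Arguments.

Theorem proposition4p11 (R : rcfType) (n : nat) (pi : 'I_n -> R)
  (P : 'M[R]_n) (part : {set {set 'I_n}}) (s : seq R) (l : nat) (alpha : R) :
  pos_prob pi -> stochastic P -> reversible pi P ->
  partition part [set: 'I_n] ->
  sorted_eigenvalues P s ->
  (2 <= l)%N -> 0 < alpha < 1 ->
  let A := alpha *: P + (1 - alpha) *: gibbs_kernel pi part in
  frob_pi2 pi (A ^+ l - Pimx pi)
    <= (1 - alpha * abs_spectral_gap n s) ^+ (2 * (l - 1))
       * frob_pi2 pi (A - Pimx pi).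
Proof.
move=> [pipos pisum] [Pnn Prow] Prev hpart [ssort Pchar] hl /andP[al0 al1].
cbv zeta.
have Gstat := gibbs_stat pipos hpart.
have Grow := gibbs_rowsum pipos hpart.
have Gnn := gibbs_nonneg pipos hpart.
move: Gstat Grow Gnn; set G := gibbs_kernel pi part; clearbody G => Gstat Grow Gnn.
set A := alpha *: P + _.
set Pi := Pimx pi.
set rho := Num.max `|s`_1| `|s`_(n.-1)|.
have rho0 : 0 <= rho by rewrite le_max normr_ge0.
have -> : 1 - alpha * abs_spectral_gap n s = alpha * rho + (1 - alpha).
  by rewrite /abs_spectral_gap -/rho; ring.
set c := alpha * rho + (1 - alpha).
  rewrite /abs_spectral_gap -/rho; try ring.
have Pstat : stat pi P.
  move=> y; under eq_bigr do rewrite Prev.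
  by rewrite -mulr_sumr Prow mulr1.
have Arow : rowsum1 A.
  move=> x; under eq_bigr do rewrite !mxE.
  by rewrite big_split /= -!mulr_sumr Prow Grow; ring.
have Astat : stat pi A.
  move=> y; under eq_bigr do rewrite !mxE mulrDr mulrCA [X in _ + X]mulrCA.
  by rewrite big_split /= -!mulr_sumr Pstat Gstat; ring.
have APi : A * Pi = Pi by rewrite -mulmxE mul_Pi_r.
have PiPi : Pi * Pi = Pi by rewrite -mulmxE (mul_Pi_r _ (rowsum_Pi pisum)).
have PiA : forall j, Pi * A ^+ j = Pi.
  elim=> [|j IH]; first by rewrite expr0 mulr1.
  by rewrite exprS mulrA -mulmxE mul_Pi_l // mulmxE IH.
have pow : forall k, (A - Pi) ^+ k.+1 = A ^+ k.+1 - Pi.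
  elim=> [|k IH]; first by rewrite !expr1.
  rewrite exprS IH mulrBr !mulrBl APi PiA PiPi -exprS.
  by rewrite subrr subr0.
have bound f : pn pi ((A - Pi) *m f) <= c ^+ 2 * pn pi f.
  have e : (A - Pi) *m f = alpha *: ((P - Pi) *m f) + (1 - alpha) *: ((G - Pi) *m f).
    rewrite !scalemxAl -mulmxDl; congr (_ *m _).
    by apply/matrixP => i j; rewrite !mxE; ring.
  rewrite e; apply: comb => //; last first.
  - exact: K_contract.
  set g := (1%:M - Pi) *m f.
  have eg : (P - Pi) *m f = P *m g by rewrite /g mulmxA mulmxBr mulmx1 mul_Pi_r.
  have stat1 : stat pi 1%:M.
    move=> y; rewrite (bigD1 y) //= big1 => [|x /negbTE xy]; rewrite !mxE ?eqxx ?xy.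
      by rewrite mulr1 addr0.
    by rewrite mulr0.
  have pg := pn_subPi pisum f stat1.
  have gE x : g x 0 = f x 0 - mean pi f.
    rewrite /g mulmxBl mul1mx -(PiE pi f x).
    by rewrite [LHS]mxE [X in _ + X]mxE.
  have g0 : mean pi g = 0.
    rewrite /mean; under eq_bigr do rewrite gE mulrBr.
    by rewrite sumrB -mulr_suml pisum mul1r /mean subrr.
  rewrite eg; apply: le_trans (P_meanzero pipos pisum Pnn Prow Prev g0 ssort Pchar) _.
  rewrite -/rho ler_wpM2l ?sqr_ge0 // /g pg mul1mx lerBlDr lerDl sqr_ge0 //.
  by rewrite ltW // ltW.
have key : forall k, frob_pi2 pi ((A - Pi) ^+ k.+1) <= (c ^+ 2) ^+ k * frob_pi2 pi (A - Pi).
  elim=> [|k IH]; first by rewrite expr0 mul1r expr1.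
  rewrite exprS -mulmxE.
  apply: le_trans (frob_mul pipos _ (sqr_ge0 c) bound) _.
  by rewrite [(c ^+ 2) ^+ k.+1]exprS -mulrA ler_wpM2l ?sqr_ge0.
case: l hl => [|[|k]] // _.
by rewrite -pow exprM subSS subn0; apply: key.
Qed.
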